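(* Let $d$ be a $\delta$-hyperbolic metric on a set containing distinct points $w,x,y,z$, let $(T,d_T)$ be the universal tree on $x,y,z$ with Steiner node $r$, and let $\pi$ be a permutation of $\{x,y,z\}$ such that $(\pi y,\pi z)_w=\max\big((x,y)_w,(y,z)_w,(x,z)_w\big)$ (so that $w$ is sorted into a zone of $\pi x$ and assigned the distance $d_T(w,r):=(\pi y,\pi z)_w$ to $r$). Then the resulting tree distances from $w$ to $\pi y$ and $\pi z$ through $r$ have additive distortion at most $\delta$: \[\big|(\pi y,\pi z)_w+d_T(r,\pi y)-d(w,\pi y)\big|\le\delta\quad\text{and}\quad\big|(\pi y,\pi z)_w+d_T(r,\pi z)-d(w,\pi z)\big|\le\delta.\]
   Context: The Gromov product is $(a,b)_c=\tfrac12\big(d(c,a)+d(c,b)-d(a,b)\big)$. A metric $d$ is $\delta$-hyperbolic if $(a,b)_c\ge\min\big((a,e)_c,(b,e)_c\big)-\delta$ for all points $a,b,c,e$. The universal tree on $x,y,z$ has nodes $x,y,z,r$ with $r$ adjacent to $x,y,z$ by edges of weights $d_T(x,r)=(y,z)_x$, $d_T(y,r)=(x,z)_y$, $d_T(z,r)=(x,y)_z$. *)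

(* Defs.v *)
From mathcomp Require Import all_boot all_order all_algebra.
Set Implicit Arguments. Unset Strict Implicit. Unset Printing Implicit Defensive.
Import Order.TTheory GRing.Theory Num.Theory.
Local Open Scope ring_scope.

Section Defs.
Variables (R : realFieldType) (T : eqType).

Definition is_metric (d : T -> T -> R) : Prop :=
  [/\ (forall a b, d a b = 0 <-> a = b),
      (forall a b, d a b = d b a) &
      (forall a b c, d a c <= d a b + d b c)].

Definition gromov (d : T -> T -> R) (a b c : T) : R :=
  (d c a + d c b - d a b) / 2.

Definition hyperbolic (d : T -> T -> R) (delta : R) : Prop :=
  forall a b c e : T,
    gromov d a b c >= Num.min (gromov d a e c) (gromov d b e c) - delta.

(* Universal tree on x,y,z with Steiner node r: weight of the edge from
   leaf v in {x,y,z} to r, i.e. d_T(v,r) = d_T(r,v). *)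
Definition tree_dist_r (d : T -> T -> R) (x y z v : T) : R :=
  if v == x then gromov d y z x
  else if v == y then gromov d x z y
  else gromov d x y z.
End Defs.

(* Main.v *)
Require Import Defs.
From mathcomp Require Import all_boot all_order all_algebra.
From mathcomp Require Import lra.
Import Order.TTheory GRing.Theory Num.Theory.
Local Open Scope ring_scope.

Lemma core (R : realFieldType) (T : eqType) (d : T -> T -> R) (delta : R) (w a b c : T) :
  is_metric d -> hyperbolic d delta ->
  gromov d a b w <= gromov d b c w -> gromov d a c w <= gromov d b c w ->
  `| gromov d b c w + (d b a + d b c - d a c) / 2 - d w b | <= delta.
Proof.
move=> [_ Hs _] Hh h1 h2.
have H1 := Hh a c w b. have H2 := Hh a b w c.
have e1 : gromov d c b w = gromov d b c w by rewrite /gromov (Hs c b); lra.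
rewrite e1 in H1.
have e2 : Num.min (gromov d a b w) (gromov d b c w) = gromov d a b w by apply/min_idPl.
have e3 : Num.min (gromov d a c w) (gromov d b c w) = gromov d a c w by apply/min_idPl.
rewrite e2 in H1; rewrite e3 in H2.
move: H1 H2 h1 h2; rewrite /gromov => H1 H2 h1 h2; have s1 := Hs b a; have s2 := Hs c a; have s3 := Hs c b; have s4 := Hs a c; have s5 := Hs a b; have s6 := Hs b c.
rewrite ler_norml; apply/andP; split; lra.
Qed.

Theorem proposition1 (R : realFieldType) (T : eqType) (d : T -> T -> R)
    (delta : R) (w x y z px py pz : T) :
  is_metric d -> hyperbolic d delta ->
  uniq [:: w; x; y; z] ->
  perm_eq [:: px; py; pz] [:: x; y; z] ->
  gromov d py pz w =
    Num.max (gromov d x y w) (Num.max (gromov d y z w) (gromov d x z w)) ->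
  `| gromov d py pz w + tree_dist_r d x y z py - d w py | <= delta /\
  `| gromov d py pz w + tree_dist_r d x y z pz - d w pz | <= delta.
Proof.
move=> Hm Hh Hu Hp Hmax.
have Hs : forall a b, d a b = d b a by case: Hm.
have [T1 [T2 [M1 M2]]] :
  [/\ tree_dist_r d x y z py = (d py px + d py pz - d px pz) / 2,
      tree_dist_r d x y z pz = (d pz px + d pz py - d px py) / 2,
      gromov d px py w <= gromov d py pz w &
      gromov d px pz w <= gromov d py pz w].
  have m1 : gromov d x y w <= gromov d py pz w by rewrite Hmax le_max lexx.
  have m2 : gromov d y z w <= gromov d py pz w by rewrite Hmax !le_max lexx orbT.
  have m3 : gromov d x z w <= gromov d py pz w by rewrite Hmax !le_max lexx !orbT.
  have Hu' : uniq [:: px; py; pz] by rewrite (perm_uniq Hp); case/andP: Hu.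
  move: Hu; rewrite /= !inE !negb_or => /and4P [/and3P[_ _ _] /andP[nxy nxz] nyz _].
  have nyx : (y == x) = false by rewrite eq_sym (negbTE nxy).
  have nzx : (z == x) = false by rewrite eq_sym (negbTE nxz).
  have nzy : (z == y) = false by rewrite eq_sym (negbTE nyz).
  have hx : px \in [:: x; y; z] by rewrite -(perm_mem Hp) inE eqxx.
  have hy : py \in [:: x; y; z] by rewrite -(perm_mem Hp) !inE eqxx orbT.
  have hz : pz \in [:: x; y; z] by rewrite -(perm_mem Hp) !inE eqxx !orbT.
  move: Hu' m1 m2 m3.
  rewrite !inE in hx hy hz.
  case/or3P: hx => /eqP ->; case/or3P: hy => /eqP ->; case/or3P: hz => /eqP -> /=;
    rewrite ?inE ?eqxx ?orbT //= ?nyx ?nzx ?nzy ?(negbTE nxy) ?(negbTE nxz) ?(negbTE nyz) //= => _;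
    rewrite /tree_dist_r ?eqxx ?nyx ?nzx ?nzy ?(negbTE nxy) ?(negbTE nxz) ?(negbTE nyz) /gromov;
    rewrite ?(Hs w x) ?(Hs w y) ?(Hs w z) ?(Hs y x) ?(Hs z x) ?(Hs z y) => m1 m2 m3;
    split; lra.
split.
  by rewrite T1; apply: core.
rewrite T2.
have e : gromov d py pz w = gromov d pz py w by rewrite /gromov (Hs py pz); lra.
rewrite e; apply: core => //; rewrite -e //.
Qed.
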